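(* Let $A$ be a semiprime non-commutative associative algebra over $\Phi$ with center $Z$. Then: (i) $\mathrm{Der}(A)/I_Z$ is a strongly non-degenerate Lie algebra; (ii) if $Z$ contains no non-zero associative ideals of $A$ (in particular, if $A$ is prime), then $\mathrm{Der}(A)$ is a strongly non-degenerate Lie algebra.
   Context: $\Phi$ is a unital commutative ring in which $2$ and $3$ are invertible; all algebras are $\Phi$-modules. $\mathrm{Der}(A)$ is the Lie algebra (under $[\delta,\mu]=\delta\mu-\mu\delta$) of all associative derivations of $A$. $Z$ is the center of $A$ and $I_Z=\{\delta\in\mathrm{Der}(A): \delta(A)\subseteq Z\}$. An element $x$ of a Lie algebra $M$ is an absolute zero divisor if $[x,[x,M]]=0$; $M$ is strongly non-degenerate if it has no non-zero absolute zero divisors. *)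

(* Defs.v *)
From HB Require Import structures.
From mathcomp Require Import all_boot all_order all_algebra.
Set Implicit Arguments. Unset Strict Implicit. Unset Printing Implicit Defensive.
Import GRing.Theory.
Local Open Scope ring_scope.

Definition assoc_algebra (Phi : comPzRingType) (A : lmodType Phi)
    (mul : A -> A -> A) : Prop :=
  [/\ forall x y z, mul x (mul y z) = mul (mul x y) z,
      forall x y z, mul (x + y) z = mul x z + mul y z,
      forall x y z, mul x (y + z) = mul x y + mul x z,
      forall (a : Phi) x y, mul (a *: x) y = a *: mul x y
    & forall (a : Phi) x y, mul x (a *: y) = a *: mul x y].

Definition alg_ideal (Phi : comPzRingType) (A : lmodType Phi)
    (mul : A -> A -> A) (I : A -> Prop) : Prop :=
  [/\ I 0,
      forall x y, I x -> I y -> I (x + y),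
      forall (a : Phi) x, I x -> I (a *: x),
      forall x y, I y -> I (mul x y)
    & forall x y, I x -> I (mul x y)].

(* semiprime: no non-zero ideal I with I^2 = 0 (I^2 is spanned by the
   products of elements of I) *)
Definition semiprime (Phi : comPzRingType) (A : lmodType Phi)
    (mul : A -> A -> A) : Prop :=
  forall I : A -> Prop, alg_ideal mul I ->
    (forall x y, I x -> I y -> mul x y = 0) -> forall x, I x -> x = 0.

Definition noncommutative (Phi : comPzRingType) (A : lmodType Phi)
    (mul : A -> A -> A) : Prop :=
  exists x y, mul x y <> mul y x.

Definition center (Phi : comPzRingType) (A : lmodType Phi)
    (mul : A -> A -> A) (z : A) : Prop :=
  forall x, mul z x = mul x z.

Definition is_derivation (Phi : comPzRingType) (A : lmodType Phi)
    (mul : A -> A -> A) (d : A -> A) : Prop :=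
  [/\ forall x y, d (x + y) = d x + d y,
      forall (a : Phi) x, d (a *: x) = a *: d x
    & forall x y, d (mul x y) = mul (d x) y + mul x (d y)].

Definition der_bracket (A : zmodType) (d m : A -> A) : A -> A :=
  fun x => d (m x) - m (d x).

Definition I_Z (Phi : comPzRingType) (A : lmodType Phi)
    (mul : A -> A -> A) (d : A -> A) : Prop :=
  is_derivation mul d /\ forall x, center mul (d x).

(* The quotient Lie algebra L / I (L a Lie algebra given as a predicate on
   the carrier, I an ideal of L given as a predicate, br the bracket) is
   strongly non-degenerate: no non-zero absolute zero divisors, i.e.
   x + I with [x,[x,L]] \subseteq I forces x \in I. *)
Definition strongly_nondeg_quot (T : Type) (L I : T -> Prop)
    (br : T -> T -> T) : Prop :=
  forall x, L x -> (forall y, L y -> I (br x (br x y))) -> I x.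

Definition strongly_nondeg (T : Type) (L : T -> Prop) (zero : T)
    (br : T -> T -> T) : Prop :=
  strongly_nondeg_quot L (fun x => x = zero) br.

(* Main.v *)
Require Import Defs.
From HB Require Import structures.
From mathcomp Require Import all_boot all_order all_algebra.
Import GRing.Theory.
Local Open Scope ring_scope.
Set Implicit Arguments. Unset Strict Implicit.

Section Alg.
Variables (Phi : comPzRingType) (A : lmodType Phi) (mul : A -> A -> A).
Hypothesis hA : assoc_algebra mul.
Local Notation "x ** y" := (mul x y) (at level 40, left associativity).

Lemma mulA x y z : x ** (y ** z) = x ** y ** z.
Proof. by case: hA. Qed.
Lemma mulDl x y z : (x + y) ** z = x ** z + y ** z.
Proof. by case: hA. Qed.
Lemma mulDr x y z : x ** (y + z) = x ** y + x ** z.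
Proof. by case: hA. Qed.
Lemma mulZl (a : Phi) x y : (a *: x) ** y = a *: (x ** y).
Proof. by case: hA. Qed.
Lemma mulZr (a : Phi) x y : x ** (a *: y) = a *: (x ** y).
Proof. by case: hA. Qed.
Lemma mul0r x : x ** 0 = 0.
Proof. by apply: (addrI (x ** 0)); rewrite -mulDr !addr0. Qed.
Lemma mul0l x : 0 ** x = 0.
Proof. by apply: (addrI (0 ** x)); rewrite -mulDl !addr0. Qed.
Lemma mulNl x y : (- x) ** y = - (x ** y).
Proof. by apply: (addrI (x ** y)); rewrite -mulDl !subrr mul0l. Qed.
Lemma mulNr x y : x ** (- y) = - (x ** y).
Proof. by apply: (addrI (x ** y)); rewrite -mulDr !subrr mul0r. Qed.
Lemma mulBl x y z : (x - y) ** z = x ** z - y ** z.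
Proof. by rewrite mulDl mulNl. Qed.
Lemma mulBr x y z : x ** (y - z) = x ** y - x ** z.
Proof. by rewrite mulDr mulNr. Qed.
Lemma mulnl x y n : (x *+ n) ** y = (x ** y) *+ n.
Proof. by elim: n => [|n IH]; rewrite ?mulr0n ?mul0l // !mulrS mulDl IH. Qed.
Lemma mulnr x y n : x ** (y *+ n) = (x ** y) *+ n.
Proof. by elim: n => [|n IH]; rewrite ?mulr0n ?mul0r // !mulrS mulDr IH. Qed.

Hypothesis hsp : semiprime mul.

Lemma L0 c : (forall r, c ** r ** c = 0) -> c ** c = 0 -> c = 0.
Proof.
move=> hr hc.
pose R z := c ** z = 0 /\ forall y, c ** y ** z = 0.
pose I x := R x /\ forall z, R z -> x ** z = 0.
have Rid : forall x y, R x -> R (y ** x) /\ R (x ** y).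
  move=> x y [h1 h2]; split; split.
  - by rewrite mulA h2.
  - by move=> t; rewrite !mulA -(mulA c) h2.
  - by rewrite mulA h1 mul0l.
  - by move=> t; rewrite mulA h2 mul0l.
apply: (hsp (I:=I)); last first.
- split; first by split=> // y.
  by move=> z [].
- by move=> x y [_ hx] [ry _]; apply: hx.
split.
- split; first by split; [exact: mul0r | move=> y; exact: mul0r].
  by move=> z _; exact: mul0l.
- move=> x y [[a1 a2] a3] [[b1 b2] b3]; split.
    split; first by rewrite mulDr a1 b1 addr0.
    by move=> t; rewrite mulDr a2 b2 addr0.
  by move=> z hz; rewrite mulDl a3 // b3 // addr0.
- move=> a x [[a1 a2] a3]; split.
    split; first by rewrite mulZr a1 scaler0.
    by move=> t; rewrite mulZr a2 scaler0.
  by move=> z hz; rewrite mulZl a3 // scaler0.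
- move=> x y [ry hy]; split; first by case: (Rid y x ry).
  by move=> z hz; rewrite -mulA hy ?mul0r //; case: (Rid z y hz).
- move=> x y [rx hx]; split; first by case: (Rid x y rx).
  by move=> z hz; rewrite -mulA hx //; case: (Rid z y hz).
Qed.

Definition com x y := locked (x ** y - y ** x).
Lemma comE x y : com x y = x ** y - y ** x.
Proof. by rewrite /com -lock. Qed.

Lemma two_inv (h2 : exists u : Phi, 2%:R * u = 1) (x : A) : x *+ 2 = 0 -> x = 0.
Proof.
case: h2 => v hv hx; rewrite -[x]scale1r -hv mulrC -scalerA scaler_nat hx scaler0 //.
Qed.
Lemma three_inv (h3 : exists u : Phi, 3%:R * u = 1) (x : A) : x *+ 3 = 0 -> x = 0.
Proof.
case: h3 => v hv hx; rewrite -[x]scale1r -hv mulrC -scalerA scaler_nat hx scaler0 //.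
Qed.

Lemma cenC u s : center mul u -> u ** (u ** s) = 0 -> u ** s = 0.
Proof.
move=> hu h; apply: L0.
  move=> r; rewrite mulA -(hu (u ** s ** r)) !mulA; rewrite mulA in h; by rewrite h !mul0l.
by rewrite mulA -(hu (u ** s)) h mul0l.
Qed.

Lemma comMl x y w : com (x ** y) w = x ** com y w + com x w ** y.
Proof. by rewrite !comE mulBr mulBl !mulA addrA subrK. Qed.
Lemma comMr s y t : com s (y ** t) = com s y ** t + y ** com s t.
Proof. by rewrite !comE mulBr mulBl !mulA addrA subrK. Qed.
Lemma com_cu u x w : center mul u -> com (u ** x) w = u ** com x w.
Proof. by move=> hu; rewrite !comE mulBr !mulA (hu w). Qed.
Lemma com_cen c w : center mul c -> com c w = 0.
Proof. by move=> hc; rewrite !comE hc subrr. Qed.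
Lemma cen_mul_com u x y : center mul u -> u ** (x ** y) = x ** (u ** y).
Proof. by move=> hu; rewrite !mulA hu. Qed.

Lemma stepA b : (forall x, center mul (com b x)) -> center mul b.
Proof.
move=> hb x; apply/eqP; rewrite -subr_eq0 -comE; apply/eqP.
set c := com b x.
have hc := hb x; rewrite -/c in hc.
have hbc : center mul (b ** c).
  have -> : b ** c = com b (b ** x) by rewrite /c !comE mulBr !mulA.
  exact: hb.
have hcy : forall y, c ** com b y = 0.
  move=> y; rewrite !comE mulBr !mulA (hc b) (hc y) -(mulA y c b) (hc b) hbc subrr //.
have hcc : c ** c = 0 by rewrite {2}/c hcy.
apply: L0 => // r; by rewrite -mulA -(hc r) mulA hcc mul0l.
Qed.


Section Der.
Variable D : A -> A.
Hypothesis hD : is_derivation mul D.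

Lemma DD x y : D (x + y) = D x + D y. Proof. by case: hD. Qed.
Lemma DZ (a : Phi) x : D (a *: x) = a *: D x. Proof. by case: hD. Qed.
Lemma DM x y : D (x ** y) = D x ** y + x ** D y. Proof. by case: hD. Qed.
Lemma D0 : D 0 = 0.
Proof. by apply: (addrI (D 0)); rewrite -DD !addr0. Qed.
Lemma DN x : D (- x) = - D x.
Proof. by apply: (addrI (D x)); rewrite -DD !subrr D0. Qed.
Lemma DB x y : D (x - y) = D x - D y.
Proof. by rewrite DD DN. Qed.
Lemma Dcom p q : D (com p q) = com (D p) q + com p (D q).
Proof.
by rewrite !comE DB !DM opprD [- _ + - _]addrC addrACA.
Qed.
Lemma DDM x y : D (D (x ** y)) = D (D x) ** y + (D x ** D y) *+ 2 + x ** D (D y).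
Proof. by rewrite DM DD !DM mulr2n !addrA. Qed.

Lemma cenD z : center mul z -> center mul (D z).
Proof.
move=> hz x; have := congr1 D (hz x); rewrite !DM (hz (D x)) addrC.
exact: addrI.
Qed.

Definition ad b := fun x => com b x.
Lemma ad_der b : is_derivation mul (ad b).
Proof.
split.
- by move=> x y; rewrite /ad !comE mulDr mulDl opprD addrACA.
- by move=> a x; rewrite /ad !comE mulZr mulZl scalerBr.
- by move=> x y; rewrite /ad !comE mulBl mulBr !mulA addrA subrK.
Qed.
Lemma zD_der z : center mul z -> is_derivation mul (fun x => z ** D x).
Proof.
move=> hz; split.
- by move=> x y; rewrite DD mulDr.
- by move=> a x; rewrite DZ mulZr.
- by move=> x y; rewrite DM mulDr !mulA (hz x).
Qed.

Lemma br_ad b x : der_bracket D (ad b) x = com (D b) x.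
Proof. by rewrite /der_bracket /ad Dcom addrK. Qed.
Lemma br2_ad b x : der_bracket D (der_bracket D (ad b)) x = com (D (D b)) x.
Proof. by rewrite {1}/der_bracket !br_ad Dcom addrK. Qed.
Lemma br_zD z x : der_bracket D (fun y => z ** D y) x = D z ** D x.
Proof. by rewrite /der_bracket DM addrK. Qed.
Lemma br2_zD z x :
  der_bracket D (der_bracket D (fun y => z ** D y)) x = D (D z) ** D x.
Proof. by rewrite {1}/der_bracket !br_zD DM addrK. Qed.


Lemma comDl x y w : com (x + y) w = com x w + com y w.
Proof. by rewrite !comE mulDl mulDr opprD addrACA. Qed.
Lemma comnl x w n : com (x *+ n) w = com x w *+ n.
Proof. by rewrite !comE mulnl mulnr mulrnBl. Qed.

Variables (h2 : exists u : Phi, 2%:R * u = 1) (h3 : exists u : Phi, 3%:R * u = 1).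
Hypothesis HZ : forall mu, is_derivation mul mu ->
  forall x, center mul (der_bracket D (der_bracket D mu) x).

Lemma P0 b : center mul (D (D b)).
Proof. apply: stepA => x; rewrite -br2_ad; exact: HZ (ad_der b) x. Qed.

Lemma P1 z x w : center mul z -> D (D z) ** com (D x) w = 0.
Proof.
move=> hz; have := HZ (zD_der hz) x; rewrite br2_zD => h.
by have := com_cen w h; rewrite com_cu //; apply: P0.
Qed.

Lemma E1 x y w :
  D (D x) ** com y w + (com (D x ** D y) w) *+ 2 + D (D y) ** com x w = 0.
Proof.
have := com_cen w (P0 (x ** y)).
by rewrite DDM !comDl (com_cu _ _ (P0 x)) -(P0 y x) (com_cu _ _ (P0 y)) mulr2n.
Qed.

Lemma Estar z x w : center mul z ->
  (D z ** com (D x) w) *+ 2 + D (D z) ** com x w = 0.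
Proof.
move=> hz; have := E1 x z w.
by rewrite (com_cen w hz) mul0r add0r -(cenD hz (D x)) com_cu //; apply: cenD.
Qed.

Lemma Q1 z x w : center mul z -> D (D z) ** com x w = 0.
Proof.
move=> hz; apply: cenC; first exact: P0.
have := Estar x w hz; rewrite addrC => /eqP; rewrite addr_eq0 => /eqP ->.
by rewrite mulNr mulnr (cen_mul_com _ _ (P0 z)) P1 // mul0r mul0rn oppr0.
Qed.

Lemma Q2 z x w : center mul z -> D z ** com (D x) w = 0.
Proof.
move=> hz; apply: two_inv => //; have := Estar x w hz.
by rewrite Q1 // addr0.
Qed.

Lemma E3 t x w :
  D (D x) ** com (D t) w + (D (D t) ** com (D x) w) *+ 2
  + D (D (D t)) ** com x w = 0.
Proof. by have := E1 x (D t) w; rewrite -(P0 t (D x)) (com_cu _ _ (P0 t)). Qed.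

Lemma Q3 t x w : D (D (D t)) ** com x w = 0.
Proof.
apply: cenC; first exact: (cenD (P0 t)).
have := E3 t x w; rewrite addrC => /eqP; rewrite addr_eq0 => /eqP ->.
rewrite mulNr mulDr mulnr (cen_mul_com _ _ (cenD (P0 t))).
rewrite (cen_mul_com (D (D t)) _ (cenD (P0 t))).
by rewrite !(Q2 _ _ (P0 t)) !mul0r mul0rn addr0 oppr0.
Qed.

Lemma E4 t x :
  forall w, D (D x) ** com (D t) w + (D (D t) ** com (D x) w) *+ 2 = 0.
Proof. by move=> w; have := E3 t x w; rewrite Q3 addr0. Qed.

Lemma Q4 t x w : D (D t) ** com (D x) w = 0.
Proof.
apply: three_inv => //.
have e1 := E4 t x w; have e2 := E4 x t w.
move: e1 => /eqP; rewrite addr_eq0 => /eqP e1.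
move: e2; rewrite e1 mulNrn -mulrnA (mulrSr _ 3) opprD addrCA subrr addr0.
by move/eqP; rewrite oppr_eq0 => /eqP.
Qed.


Lemma Q5 x y w : D (D x) ** com y w = 0.
Proof.
have G : forall x y, D (D x) ** (D (D x) ** com y w)
                     + D (D x) ** (D (D y) ** com x w) = 0.
  move=> a b; have := congr1 (mul (D (D a))) (E1 a b w).
  have z0 : D (D a) ** com (D a ** D b) w = 0.
    by rewrite comMl mulDr (cen_mul_com (D a) _ (P0 a)) Q4 mul0r mulA Q4 mul0l addr0.
  by rewrite mul0r !mulDr z0 addr0 addr0.
have H : D (D x) ** (D (D x) ** com x w) = 0.
  by apply: two_inv => //; rewrite mulr2n; apply: G.
apply: cenC; first exact: P0.
apply: cenC; first exact: P0.
have := G x y; move/eqP; rewrite addr_eq0 => /eqP ->.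
rewrite mulNr (cen_mul_com (D (D y)) _ (P0 x)).
by rewrite (cen_mul_com (D (D y)) _ (P0 x)) H mul0r oppr0.
Qed.

Lemma Q6 x y : center mul (D x ** D y).
Proof.
move=> w; apply/eqP; rewrite -subr_eq0 -comE; apply/eqP.
apply: two_inv => //; have := E1 x y w; by rewrite !Q5 add0r addr0.
Qed.

Lemma Q7 x y s t : D x ** D y ** com s t = 0.
Proof.
apply: two_inv => //; have := Q5 (x ** y) s t.
rewrite DDM mulDl mulDl mulnl (P0 x y) -(mulA y) Q5 mul0r add0r.
by rewrite -(mulA x) Q5 mul0r addr0.
Qed.

Lemma Q8 x v q s t : D x ** v ** D q ** com s t = 0.
Proof.
have := Q7 x (v ** q) s t; rewrite DM mulDr mulDl !mulA (Q6 x v q).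
by rewrite -(mulA q) Q7 mul0r add0r.
Qed.

Lemma Fii x v r s t : D x ** v ** D x ** r ** com s t = 0.
Proof.
have e : D x ** r = D (x ** r) - x ** D r by rewrite DM addrK.
rewrite -(mulA (D x ** v)) e mulBr mulBl Q8.
by rewrite mulA -(mulA (D x)) Q8 subr0.
Qed.

Lemma Fiv x r s t : D x ** D x ** r ** com s t = 0.
Proof. by rewrite (Q6 x x r) -(mulA r) Q7 mul0r. Qed.

Lemma Alpha x s t : D x ** com s t ** D x = 0.
Proof.
apply: L0.
  move=> r.
  have -> : D x ** com s t ** D x ** r ** (D x ** com s t ** D x)
      = D x ** com s t ** (D x ** r ** D x ** com s t) ** D x by rewrite !mulA.
  by rewrite Q8 mul0r mul0l.
have -> : D x ** com s t ** D x ** (D x ** com s t ** D x)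
    = D x ** com s t ** (D x ** D x ** com s t) ** D x by rewrite !mulA.
by rewrite Q7 mul0r mul0l.
Qed.

Lemma Alpha' x r s t : D x ** r ** com s t ** D x = 0.
Proof.
apply: L0.
  move=> r'.
  have -> : D x ** r ** com s t ** D x ** r' ** (D x ** r ** com s t ** D x)
      = D x ** r ** com s t ** (D x ** r' ** D x ** r ** com s t) ** D x
      by rewrite !mulA.
  by rewrite Fii mul0r mul0l.
have -> : D x ** r ** com s t ** D x ** (D x ** r ** com s t ** D x)
    = D x ** r ** com s t ** (D x ** D x ** r ** com s t) ** D x
    by rewrite !mulA.
by rewrite Fiv mul0r mul0l.
Qed.

Lemma Beta x s t : D x ** com s t = 0.
Proof.
have e : forall r, D x ** com s t ** r ** D x = 0.
  move=> r.
  have e1 : com s t ** r = com s (t ** r) - t ** com s r by rewrite comMr addrK.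
  rewrite -(mulA (D x)) e1 mulBr mulBl Alpha mulA Alpha' subr0 //.
apply: L0.
  by move=> r; rewrite mulA e mul0l.
by rewrite mulA Alpha mul0l.
Qed.

Lemma Gamma x y s t : D x ** y ** com s t = 0.
Proof.
have e1 : y ** com s t = com s (y ** t) - com s y ** t by rewrite comMr addrC addKr.
by rewrite -mulA e1 mulBr Beta mulA Beta mul0l subr0.
Qed.

Lemma Delta x w : com (D x) w = 0.
Proof.
apply: L0.
  move=> r; rewrite {1}comE mulBl mulBl.
  by rewrite -(mulA (D x) w r) Gamma -(mulA w) -(mulA w) Gamma mul0r subr0.
by rewrite {1}comE mulBl Gamma -(mulA w) Beta mul0r subr0.
Qed.

Lemma core x : center mul (D x).
Proof. by move=> w; apply/eqP; rewrite -subr_eq0 -comE; apply/eqP; apply: Delta. Qed.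

End Der.

Lemma partii D (h2 : exists u : Phi, 2%:R * u = 1) :
  is_derivation mul D -> (forall x, center mul (D x)) ->
  (forall I : A -> Prop, alg_ideal mul I ->
         (forall x, I x -> center mul x) -> forall x, I x -> x = 0) ->
  forall x, D x = 0.
Proof.
move=> hD hc hI x.
have K : forall x y w, D x ** com y w + D y ** com x w = 0.
  move=> a b w; have := com_cen w (hc (a ** b)).
  by rewrite (DM hD) comDl (com_cu _ _ (hc a)) -(hc b a) (com_cu _ _ (hc b)).
have Kxx : forall x w, D x ** com x w = 0.
  by move=> a w; apply: two_inv => //; rewrite mulr2n; apply: K.
have Dc : forall y w, D x ** com y w = 0.
  move=> y w.
  have eg : D x ** com y w = - (D y ** com x w).
    by apply/eqP; rewrite -addr_eq0; apply/eqP; apply: K.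
  have e : forall r, D x ** com y w ** r ** (D y ** com x w) = 0.
    move=> r; rewrite (hc y (com x w)) -(mulA (D x) (com y w) r).
    rewrite (hc x (com y w ** r)) !mulA -(mulA (com y w ** r) (D x)) Kxx.
    by rewrite mul0r mul0l.
  apply: L0.
    by move=> r; rewrite {2}eg mulNr e oppr0.
  by rewrite {2}eg mulNr (hc y (com x w)) mulA -(mulA (D x)) (hc x) -(mulA (com y w)) -(hc x (com x w)) Kxx mul0r mul0l oppr0.
pose I c := center mul c /\ forall s t, c ** com s t = 0.
have left : forall c y, I c -> I (y ** c).
  move=> c y [hcc hct]; split.
    move=> w; rewrite -(hcc y) -(mulA c y w) (mulA w c y) -(hcc w) -(mulA c w y).
    by apply/eqP; rewrite -subr_eq0 -mulBr -comE; apply/eqP.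
  move=> s t; rewrite -(hcc y) -mulA.
  have e1 : y ** com s t = com s (y ** t) - com s y ** t.
    by rewrite comMr addrC addKr.
  by rewrite e1 mulBr hct mulA hct mul0l subr0.
apply: (hI I); last first.
- by split; [apply: hc | apply: Dc].
- by move=> c [].
split.
- split; first by move=> y; rewrite mul0l mul0r.
  by move=> s t; rewrite mul0l.
- move=> a b [ha ha'] [hb hb']; split.
    by move=> y; rewrite mulDl mulDr ha hb.
  by move=> s t; rewrite mulDl ha' hb' addr0.
- move=> a c [ha ha']; split.
    by move=> y; rewrite mulZl mulZr ha.
  by move=> s t; rewrite mulZl ha' scaler0.
- by move=> y c hc'; apply: left.
- by move=> c y hc'; case: (hc') => hcc _; rewrite hcc; apply: left.
Qed.

End Alg.

Unset Implicit Arguments.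
From Stdlib Require Import FunctionalExtensionality.

Theorem theorem2p5 (Phi : comPzRingType)
    (h2 : exists u : Phi, 2%:R * u = 1) (h3 : exists u : Phi, 3%:R * u = 1)
    (A : lmodType Phi) (mul : A -> A -> A)
    (hA : assoc_algebra mul) (hsp : semiprime mul) (hnc : noncommutative mul) :
  strongly_nondeg_quot (is_derivation mul) (I_Z mul) (@der_bracket A)
  /\ ((forall I : A -> Prop, alg_ideal mul I ->
         (forall x, I x -> center mul x) -> forall x, I x -> x = 0) ->
      strongly_nondeg (is_derivation mul) (fun _ => 0) (@der_bracket A)).
Proof.
have core' : forall D, is_derivation mul D ->
    (forall mu, is_derivation mul mu ->
       forall x, center mul (der_bracket D (der_bracket D mu) x)) ->
    forall x, center mul (D x).
  move=> D hD HZ x; exact: (core hA hsp hD h2 h3 HZ x).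
split.
- move=> D hD H; split => //; apply: core' => // mu hmu x.
  by case: (H mu hmu) => _; apply.
- move=> hI D hD H; apply: functional_extensionality => x.
  apply: (partii hA hsp h2 hD _ hI).
  apply: core' => // mu hmu y; rewrite (H mu hmu) => z.
  by rewrite (mul0l hA) (mul0r hA).
Qed.
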